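(* Let $p$ be a positive integer, $H$ a graph, $T$ a complete rooted ternary tree and $V\subseteq V(T(H))$. Let $T_1,\dots,T_q$ be a minimal sequence of largest subtrees of $T$ with respect to $V$ lacking $p$, with corresponding sequence of sets $V_1,\dots,V_q$. Then $|OC(T_q,V_q)|\geq (|OC(T_1,V_1)|-p)/3$.
   Context: Complete rooted ternary tree: rooted tree, all root-leaf paths of equal length, every non-leaf vertex has exactly 3 children. Graph $T(H)$: for $V(H)=\{1,\dots,m\}$, vertices $v^i$ ($v\in V(T)$), each $\{v^1,\dots,v^m\}$ spanning a copy $H^v$ of $H$, plus edges $u^iv^i$ for $uv\in E(T)$; for a subtree $T'$, $T'(H)$ is the subgraph induced by the copies $H^v$, $v\in V(T')$. $OC(T,V)=\{u\in V(T): V(H^u)\cap V\neq\emptyset\}$. An immediate subtree of $T$ consists of a child of the root and all its descendants; it is largest w.r.t. $V$ if $|OC(T,V)\cap V(T')|$ is maximum among immediate subtrees. A sequence of largest subtrees: $T_1=T$, $V_1=V$, $T_{i+1}$ a largest immediate subtree of $T_i$ w.r.t. $V_i$, $V_{i+1}=V_i\cap V(T_{i+1}(H))$; $V_1,\dots,V_q$ is the corresponding sequence of sets. It is minimal lacking $p$ if $|OC(T_1,V_1)|-|OC(T_q,V_q)|\geq p$ and $|OC(T_1,V_1)|-|OC(T_{q-1},V_{q-1})|<p$. *)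

(* Defs.v *)
From HB Require Import structures.
From mathcomp Require Import all_boot all_order all_algebra.
From mathcomp Require Import finmap.
Set Implicit Arguments. Unset Strict Implicit. Unset Printing Implicit Defensive.
Local Open Scope fset_scope.

(* Complete rooted ternary tree T of depth d: its vertices are the sequences
   s : seq 'I_3 with size s <= d (the path of child choices from the root);
   the root is [::], the children of s (if size s < d) are rcons s c, and the
   subtree rooted at s consists of the vertices having s as a prefix.
   H is a graph on V(H) = 'I_m (= {1..m}); a vertex v^i of T(H) is the pair
   (v, i). *)

Definition tvert := seq 'I_3.
Definition thvert (m : nat) := (tvert * 'I_m)%type.

Definition in_subtreeH (m : nat) (s : tvert) (x : thvert m) : bool :=
  prefix s x.1.

(* OC(T', W) for the subtree T' rooted at s:
   the vertices u of T' whose copy H^u meets W. *)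
Definition OC (m : nat) (s : tvert) (W : {fset thvert m}) : {fset tvert} :=
  [fset x.1 | x in W & prefix s x.1].

(* Since OC(T',W) only contains vertices
   of T', |OC(T_s,W) ∩ V(T_{s c})| = |OC(T_{s c}, W)|. *)
Definition largest_immediate (d m : nat) (s : tvert) (W : {fset thvert m})
    (t : tvert) : Prop :=
  size s < d /\
  exists c : 'I_3, t = rcons s c /\
    forall c' : 'I_3, #|` OC (rcons s c') W| <= #|` OC t W|.

(* r 1, ..., r q are the roots of T_1, ..., T_q and Vs 1, ..., Vs q the
   corresponding sets V_1, ..., V_q. *)
Definition largest_subtree_seq (d m : nat) (V : {fset thvert m}) (q : nat)
    (r : nat -> tvert) (Vs : nat -> {fset thvert m}) : Prop :=
  1 <= q /\ r 1 = [::] /\ Vs 1 = V /\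
  forall i, 1 <= i < q ->
    largest_immediate d (r i) (Vs i) (r i.+1) /\
    Vs i.+1 = [fset x in Vs i | in_subtreeH (r i.+1) x].

Definition minimal_lacking (m : nat) (p q : nat) (r : nat -> tvert)
    (Vs : nat -> {fset thvert m}) : Prop :=
  2 <= q /\
  (p%:R <= (#|` OC (r 1%N) (Vs 1%N)|)%:R - (#|` OC (r q) (Vs q)|)%:R :> rat)%R /\
  ((#|` OC (r 1%N) (Vs 1%N)|)%:R - (#|` OC (r q.-1) (Vs q.-1)|)%:R < p%:R :> rat)%R.

(* Main.v *)
Require Import Defs.
From HB Require Import structures.
From mathcomp Require Import all_boot all_order all_algebra.
From mathcomp Require Import finmap zify.
Local Open Scope fset_scope.
Import Order.TTheory GRing.Theory Num.Theory.

Lemma prefix_split (s x : tvert) : prefix s x -> x != s ->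
  exists c : 'I_3, prefix (rcons s c) x.
Proof.
move=> /prefixP [[|c t] ->]; first by rewrite cats0 eqxx.
move=> _; exists c; by rewrite -cat_rcons prefix_prefix.
Qed.

Lemma OC_split m s (W : {fset thvert m}) :
  OC s W `<=` [fset s] `|` OC (rcons s ord0) W `|` OC (rcons s (@Ordinal 3 1 isT)) W
    `|` OC (rcons s (@Ordinal 3 2 isT)) W.
Proof.
apply/fsubsetP => x /imfsetP [y /= /andP [yW py] ->].
have [->|ne] := eqVneq y.1 s; first by rewrite !inE eqxx.
have [c pc] := prefix_split _ _ py ne.
have yc : y.1 \in OC (rcons s c) W.
  by apply/imfsetP; exists y => //=; rewrite inE; apply/andP.
rewrite !inE; case: c pc yc => [[|[|[|k]]] Hk] //= _ yc.
- have E : Ordinal Hk = ord0 by apply: val_inj.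
  by rewrite E in yc; rewrite yc !orbT.
- have E : Ordinal Hk = Ordinal (isT : 1 < 3) by apply: val_inj.
  by rewrite E in yc; rewrite yc !orbT.
- have E : Ordinal Hk = Ordinal (isT : 2 < 3) by apply: val_inj.
  by rewrite E in yc; rewrite yc !orbT.
Qed.

Lemma OC_card m s (W : {fset thvert m}) (t : tvert) :
  (forall c' : 'I_3, #|` OC (rcons s c') W| <= #|` OC t W|)%N ->
  (#|` OC s W| <= 1 + 3 * #|` OC t W|)%N.
Proof.
move=> Hc; have S := fsubset_leq_card (OC_split _ s W).

set a := OC (rcons s ord0) W; set b := OC (rcons s (Ordinal (isT : 1 < 3))) W;
set c := OC (rcons s (Ordinal (isT : 2 < 3))) W.
have U := fun A B : {fset tvert} => leq_of_leqif (leq_card_fsetU A B).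
have U1 := U ([fset s] `|` a `|` b) c.
have U2 := U ([fset s] `|` a) b.
have U3 := U ([fset s]) a.
move: S U1 U2 U3; rewrite cardfs1.
have := Hc ord0; have := Hc (Ordinal (isT : 1 < 3)); have := Hc (Ordinal (isT : 2 < 3)).
rewrite -/a -/b -/c; lia.
Qed.

Lemma OC_filter m (t : tvert) (W : {fset thvert m}) :
  OC t [fset x in W | in_subtreeH t x] = OC t W.
Proof.
apply/fsetP => x; apply/imfsetP/imfsetP => [[y /= /andP [yW py] ->]|[y /= /andP [yW py] ->]].
- exists y => //=; rewrite inE; apply/andP; split => //.
  by move: yW; rewrite !inE => /andP [].
- exists y => //=; rewrite inE; apply/andP; split => //.
  by rewrite !inE yW /in_subtreeH py.
Qed.

Theorem lemma5 (p : nat) (m : nat) (H : rel 'I_m) (d : nat)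
    (V : {fset thvert m})
    (HV : forall x, x \in V -> size x.1 <= d)
    (q : nat) (r : nat -> tvert) (Vs : nat -> {fset thvert m}) :
  0 < p ->
  largest_subtree_seq d V q r Vs ->
  minimal_lacking p q r Vs ->
  (((#|` OC (r 1%N) (Vs 1%N)|)%:R - p%:R) / 3%:R <= (#|` OC (r q) (Vs q)|)%:R
     :> rat)%R.
Proof.
move=> _ [_ [_ [_ Hseq]]] [q2 [_ Hlt]].
have Hq : (1 <= q.-1 < q)%N by apply/andP; split; lia.
have [[_ [c [Er Hc]]] EV] := Hseq _ Hq.
have Eq : q.-1.+1 = q by lia.
rewrite Eq in Er EV Hc.
have := @OC_card m _ _ _ Hc; rewrite EV OC_filter => Hb.
move: Hlt; set a1 := #|` _|; set aq1 := #|` _|; set aq := #|` _| in Hb *.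
move=> Hlt.
have H1 : (a1 < p + aq1)%N.
  by move: Hlt; rewrite ltrBlDr -natrD ltr_nat addnC.
have H2 : (a1 <= p + 3 * aq)%N by lia.
rewrite ler_pdivrMr ?ltr0n // lerBlDr -natrM -natrD ler_nat; lia.
Qed.
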